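(* Let $2\le k<m$ be integers. Then \[ \mathbf{m}\left(\mathrm{Alt}(m)\circlearrowright\binom{[m]}{k}\right)\le\mathbf{m}\left(\mathrm{Sym}(m)\circlearrowright\binom{[m]}{k}\right)\le\binom{m-\lfloor k/2\rfloor}{\lceil k/2\rceil}. \] Consequently, for fixed $k$, if $\mathcal{C}_k$ is the family of symmetric (or alternating) groups $\mathrm{Sym}(m)$ (or $\mathrm{Alt}(m)$), $m>k$, acting on $k$-subsets of $[m]$, then \[ \lim_n\frac{\mathbf{F}_{\mathcal{C}_k}(n)}{\sqrt n}\le\frac{\sqrt{k!}}{(k/2)!}\quad\text{for } k \text{ even},\qquad \lim_n\frac{\mathbf{F}_{\mathcal{C}_k}(n)}{n^{\frac{k+1}{2k}}}\le\frac{k!^{\frac{k+1}{2k}}}{\lceil k/2\rceil!}\quad\text{for } k\text{ odd}. \]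
   Context: $[m]=\{1,\dots,m\}$, $\binom{[m]}{k}$ is the set of $k$-subsets of $[m]$, and $X\circlearrowright\binom{[m]}{k}$ is the permutation group induced by the natural action of $X\in\{\mathrm{Alt}(m),\mathrm{Sym}(m)\}$ on $k$-subsets (degree $n=\binom mk$). For a transitive permutation group $X$ on a finite set $\Omega$ with $|\Omega|\ge2$, a subset $A\subseteq\Omega$ is self-separable for $X$ if there exists $x\in X$ with $A\cap A^x=\emptyset$; $\mathbf{m}(X)$ is the minimum cardinality of a non-self-separable subset. For a family $\mathcal{C}$ of transitive groups, $\mathbf{F}_{\mathcal{C}}(n)=\max\{\mathbf{m}(X):X\in\mathcal{C}\text{ of degree } n\}$ for the degrees $n$ occurring in $\mathcal{C}$, and limits are over such $n$. *)

(* Defs.v *)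
From HB Require Import structures.
From mathcomp Require Import all_boot all_order all_algebra all_fingroup.
From mathcomp Require Import alt.
From mathcomp Require Import reals exp.

Set Implicit Arguments.
Unset Strict Implicit.
Unset Printing Implicit Defensive.

Definition ksubsets (m k : nat) : {set {set 'I_m}} := [set A : {set 'I_m} | #|A| == k].

Definition act_fam (m : nat) (g : {perm 'I_m}) (S : {set {set 'I_m}})
  : {set {set 'I_m}} := [set (fun a => g a) @: A | A : {set 'I_m} in S].

Definition self_separable (m : nat) (G : {set {perm 'I_m}})
  (S : {set {set 'I_m}}) : bool :=
  [exists g in G, [disjoint S & act_fam g S]].

(* m(X) for X = G acting on k-subsets of [m]: the minimum cardinality of a
   non-self-separable subset of Omega.  (The default #|Omega| is attained,
   since Omega itself is non-self-separable whenever it is nonempty.) *)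
Definition mnum (m k : nat) (G : {set {perm 'I_m}}) : nat :=
  \big[minn/#|ksubsets m k|]_(S : {set {set 'I_m}} |
        (S \subset ksubsets m k) && ~~ self_separable G S) #|S|.

Definition mSym (m k : nat) : nat := mnum k (Sym ('I_m)).
Definition mAlt (m k : nat) : nat := mnum k (Alt ('I_m)).

(* F_C(n) for C = { X_m acting on k-subsets of [m] : m > k }, where
   mX m k = m(X_m on k-subsets).  Every such group has degree 'C(m,k) >= m,
   so the members of degree n have m <= n. *)
Definition Ffam (mX : nat -> nat -> nat) (k n : nat) : nat :=
  \max_(m < n.+1 | (k < m) && ('C(m, k) == n)) mX m k.

Definition is_degree (k n : nat) : Prop := exists2 m, k < m & 'C(m, k) = n.

(* Main.v *)
Require Import Defs.
From HB Require Import structures.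
From mathcomp Require Import all_boot all_order all_algebra all_fingroup.
From mathcomp Require Import alt.
From mathcomp Require Import reals exp.
From mathcomp Require Import zify.
Import Order.TTheory GRing.Theory Num.Theory.

Lemma big_minn_le (I : finType) (P : pred I) (F : I -> nat) D i0 :
  P i0 -> \big[minn/D]_(i | P i) F i <= F i0.
Proof.
move=> Pi0; have: i0 \in index_enum I by rewrite mem_index_enum.
elim: (index_enum I) => [|j r IH] //=.
rewrite big_cons inE; case/orP => [/eqP <- | /IH H].
  by rewrite Pi0 geq_minl.
case: (P j) => //; exact: leq_trans (geq_minr _ _) H.
Qed.

Lemma big_minn_le_idx (I : finType) (P : pred I) (F : I -> nat) D :
  \big[minn/D]_(i | P i) F i <= D.
Proof.
apply: (big_rec (fun y => y <= D)) => // i x _ hx.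
by rewrite geq_min hx orbT.
Qed.

Lemma mAlt_le_mSym m k : mAlt m k <= mSym m k.
Proof.
rewrite /mAlt /mSym /mnum.
apply: (big_ind (fun y => _ <= y)).
- exact: big_minn_le_idx.
- by move=> x y hx hy; rewrite leq_min hx hy.
move=> S /andP[SK nS]; apply: big_minn_le; rewrite SK /=.
apply: contra nS => /existsP[g /andP[_ d]].
by apply/existsP; exists g; rewrite /Sym inE d.
Qed.

Lemma mSym_le m k : 2 <= k -> k < m -> mSym m k <= 'C(m - k./2, uphalf k).
Proof.
move=> k2 km.
pose h := k./2.
have hk : h + h <= k.
  have := odd_double_half k; rewrite -addnn /h; lia.
have ch : uphalf k = k - h.
  have := odd_double_half k; rewrite uphalf_half -addnn /h; lia.
have: 0 < #|[set A : {set 'I_m} | #|A| == h]|.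
  by rewrite card_draws card_ord bin_gt0; lia.
case/card_gt0P => H; rewrite inE => /eqP cH.
pose S := [set A in ksubsets m k | H \subset A].
have SK : S \subset ksubsets m k.
  by apply/subsetP => A; rewrite inE => /andP[].
have nS : ~~ self_separable (Sym 'I_m) S.
  apply/existsP => -[g /andP[_ dis]].
  pose U := H :|: (fun a => g a) @: H.
  have cU : #|U| <= k.
    rewrite cardsU card_imset; last exact: perm_inj.
    rewrite cH; lia.
  have: 0 < #|[set B : {set 'I_m} | B \subset ~: U & #|B| == k - #|U|]|.
    rewrite cards_draws bin_gt0.
    have := cardsC U; rewrite card_ord; lia.
  case/card_gt0P => B; rewrite inE => /andP[BU /eqP cB].
  pose A := U :|: B.
  have cA : #|A| = k.
    rewrite /A cardsU.
    have -> : U :&: B = set0.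
      by rewrite setIC; apply: disjoint_setI0; rewrite disjoints_subset.
    rewrite cards0 cB; lia.
  have UA : U \subset A by apply: subsetUl.
  have HA : H \subset A by apply: subset_trans UA; apply: subsetUl.
  have AS : A \in S by rewrite !inE cA eqxx HA.
  pose A' := (fun a => (g^-1)%g a) @: A.
  have A'S : A' \in S.
    rewrite !inE card_imset; last exact: perm_inj.
    rewrite cA eqxx /=.
    apply/subsetP => x xH.
    have gx : g x \in A.
      apply: (subsetP UA); rewrite /U inE; apply/orP; right.
      by apply: imset_f.
    by apply/imsetP; exists (g x) => //; rewrite permK.
  have AgS : A \in act_fam g S.
    apply/imsetP; exists A' => //.
    rewrite /A' -imset_comp.
    rewrite (eq_imset _ (fun a => permKV g a)) /=.
    by rewrite imset_id.
  have : A \in S :&: act_fam g S by rewrite inE AS AgS.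
  by rewrite (disjoint_setI0 dis) inE.
apply: (@leq_trans #|S|).
  by apply: big_minn_le; rewrite SK nS.
have inj : {in S &, injective (fun A => A :\: H)}.
  move=> A1 A2; rewrite !inE => /andP[_ H1] /andP[_ H2] e.
  apply/setP => x; case xH: (x \in H).
    by rewrite (subsetP H1 _ xH) (subsetP H2 _ xH).
  by move/setP: e => /(_ x); rewrite !inE xH.
rewrite -(card_in_imset inj).
apply: (@leq_trans #|[set B : {set 'I_m} | B \subset ~: H & #|B| == k - h]|).
  apply: subset_leq_card; apply/subsetP => _ /imsetP[A AS ->].
  move: AS; rewrite !inE => /andP[/eqP cA HA].
  by rewrite cardsD (setIidPr HA) cA cH eqxx setDE subsetIr.
rewrite cards_draws ch.
have := cardsC H; rewrite card_ord cH => e.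
by rewrite (_ : #|~: H| = m - h) //; lia.
Qed.
Lemma ffactD n a b : n ^_ (a + b) = n ^_ a * (n - a) ^_ b.
Proof.
elim: b => [|b IH]; first by rewrite addn0 ffactn0 muln1.
by rewrite addnS !ffactnSr IH subnDA mulnA.
Qed.

Lemma expl a b e : a <= b -> a ^ e <= b ^ e.
Proof. by move=> ab; elim: e => [|e IH] //; rewrite !expnS leq_mul. Qed.

Lemma ffact_le_pow n j : n ^_ j <= n ^ j.
Proof.
rewrite ffact_prod.
have -> : n ^ j = \prod_(i < j) n by rewrite prod_nat_const card_ord.
by apply: leq_prod => i _; apply: leq_subr.
Qed.

Lemma ffact_ge_pow n j : (n.+1 - j) ^ j <= n ^_ j.
Proof.
rewrite ffact_prod.
have -> : (n.+1 - j) ^ j = \prod_(i < j) (n.+1 - j) by rewrite prod_nat_const card_ord.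
apply: leq_prod => i _; have := ltn_ord i; lia.
Qed.

Lemma ffact_mono a b j : a <= b -> a ^_ j <= b ^_ j.
Proof.
move=> ab; rewrite !ffact_prod.
by apply: leq_prod => i _; apply: leq_sub2r.
Qed.

Lemma even_ineq m h : ((m - h) ^_ h) ^ 2 <= m ^_ (h + h).
Proof.
rewrite ffactD expnS expn1.
by rewrite leq_mul2r ffact_mono ?leq_subr ?orbT.
Qed.

Lemma odd_ineq m h : ((m - h) ^_ h.+1) ^ (h + h).+1 <= (m ^_ (h + h).+1) ^ h.+1.
Proof.
rewrite -addnS ffactD expnMn expnD.
set P := (m - h) ^_ h.+1; set Q := m ^_ h.
rewrite leq_mul2r; apply/orP; right.
apply: (@leq_trans ((m - h) ^ (h.+1 * h))).
  by rewrite expnM expl // ffact_le_pow.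
apply: (@leq_trans ((m.+1 - h) ^ (h * h.+1))).
  by rewrite mulnC expl // leq_sub2r.
by rewrite expnM expl // ffact_ge_pow.
Qed.
Lemma real_even (R : realType) (x n K c : nat) (eps : R) :
  0 < n -> 0 < c -> (0 < eps)%R -> (x * c) ^ 2 <= n * K ->
  (x%:R / Num.sqrt (n%:R) <= Num.sqrt (K%:R) / c%:R + eps)%R.
Proof.
move=> n0 c0 e0 H.
apply: (@le_trans _ _ (Num.sqrt (K%:R) / c%:R)%R); last by rewrite lerDl ltW.
rewrite ler_pdivrMr ?sqrtr_gt0 ?ltr0n // mulrAC ler_pdivlMr ?ltr0n //.
rewrite -sqrtrM ?ler0n //.
have -> : (x%:R * c%:R = Num.sqrt ((x%:R * c%:R) ^+ 2) :> R)%R.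
  by rewrite sqrtr_sqr ger0_norm // mulr_ge0 ?ler0n.
rewrite ler_sqrt ?mulr_ge0 ?ler0n //.
by rewrite -natrM -natrX -natrM ler_nat [K * n]mulnC.
Qed.

Lemma real_odd (R : realType) (x n K c d k : nat) (eps : R) :
  0 < n -> 0 < k -> 0 < d -> (0 < eps)%R -> (x * d) ^ k <= (n * K) ^ c ->
  ((x%:R : R) / powR (n%:R) (c%:R / k%:R) <= powR (K%:R) (c%:R / k%:R) / d%:R + eps)%R.
Proof.
move=> n0 k0 d0 e0 H.
apply: (@le_trans _ _ (powR (K%:R) (c%:R / k%:R) / d%:R)%R); last by rewrite lerDl ltW.
rewrite ler_pdivrMr ?powR_gt0 ?ltr0n // mulrAC ler_pdivlMr ?ltr0n //.
rewrite -powRM ?ler0n // -!natrM.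
have e1 : ((x * d)%:R = ((((x * d)%:R) `^ k%:R) `^ (k%:R^-1)) :> R)%R.
  by rewrite -powRrM mulfV ?pnatr_eq0 -?lt0n // powRr1 // ler0n.
rewrite e1 powR_mulrn ?ler0n // -natrX.
have e2 : (((K * n)%:R `^ (c%:R / k%:R)) = (((K * n)%:R `^ c%:R) `^ (k%:R^-1)) :> R)%R.
  by rewrite -powRrM.
rewrite e2 powR_mulrn ?ler0n // -natrX.
apply: ge0_ler_powR; rewrite ?invr_ge0 ?nnegrE ?ler0n //.
by rewrite ler_nat [K * n]mulnC.
Qed.

Lemma mX_bound (mX : nat -> nat -> nat) : (mX = mSym \/ mX = mAlt) ->
  forall m k, 2 <= k -> k < m -> mX m k <= 'C(m - k./2, uphalf k).
Proof.
move=> hX m k k2 km; have := @mSym_le m k k2 km.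
case: hX => ->; first by [].
by apply: leq_trans; apply: mAlt_le_mSym.
Qed.

Lemma Ffam_even mX h n : (mX = mSym \/ mX = mAlt) -> 1 <= h ->
  (Ffam mX (h + h) n * h`!) ^ 2 <= n * (h + h)`!.
Proof.
move=> hX h1; rewrite /Ffam.
apply: (big_ind (fun x => (x * h`!) ^ 2 <= n * (h + h)`!)) => //.
  by move=> x y hx hy; case: (leqP x y).
move=> [m _] /= /andP[km /eqP <-].
have h2 : 2 <= h + h by lia.
have hb := @mX_bound mX hX m (h + h) h2 km.
rewrite addnn doubleK uphalf_double -addnn in hb.
apply: (@leq_trans (('C(m - h, h) * h`!) ^ 2)).
  by apply: expl; rewrite leq_mul2r hb orbT.
by rewrite bin_ffact bin_ffact even_ineq.
Qed.

Lemma Ffam_odd mX h n : (mX = mSym \/ mX = mAlt) -> 1 <= h ->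
  (Ffam mX (h + h).+1 n * h.+1`!) ^ (h + h).+1 <= (n * (h + h).+1`!) ^ h.+1.
Proof.
move=> hX h1; rewrite /Ffam.
apply: (big_ind (fun x => (x * h.+1`!) ^ (h + h).+1 <= (n * (h + h).+1`!) ^ h.+1)) => //.
  by rewrite mul0n exp0n.
  by move=> x y hx hy; case: (leqP x y).
move=> [m _] /= /andP[km /eqP <-].
have h2 : 2 <= (h + h).+1 by lia.
have hb := @mX_bound mX hX m (h + h).+1 h2 km.
rewrite addnn /= doubleK uphalf_double -addnn in hb.
apply: (@leq_trans (('C(m - h, h.+1) * h.+1`!) ^ (h + h).+1)).
  by apply: expl; rewrite leq_mul2r hb orbT.
by rewrite bin_ffact bin_ffact odd_ineq.
Qed.

Theorem lemma8p1 :
  (forall m k : nat, 2 <= k -> k < m ->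
     mAlt m k <= mSym m k /\ mSym m k <= 'C(m - k./2, uphalf k))
  /\
  (forall (R : realType) (k : nat), 2 <= k ->
     forall mX, (mX = mSym \/ mX = mAlt) ->
     forall eps : R, (0 < eps)%R -> exists N : nat, forall n : nat,
       (N <= n)%N -> is_degree k n ->
       (if ~~ odd k then
          ((Ffam mX k n)%:R / Num.sqrt (n%:R) <=
             Num.sqrt ((k`!)%:R) / ((k./2)`!)%:R + eps)%R
        else
          ((Ffam mX k n)%:R / powR (n%:R) ((k.+1)%:R / (2 * k)%:R) <=
             powR ((k`!)%:R) ((k.+1)%:R / (2 * k)%:R) / ((uphalf k)`!)%:R
               + eps)%R)).
Proof.
split.
  move=> m k k2 km; split; [exact: mAlt_le_mSym | exact: mSym_le].
move=> R k k2 mX hX eps e0; exists 0 => n _ [m0 km0 en].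
have n0 : 0 < n by rewrite -en bin_gt0 ltnW.
have odh := odd_double_half k.
case: ifP => ok.
  have ek : k = k./2 + k./2.
    by move: ok odh; case: (odd k) => //= _; rewrite -addnn.
  move: ek; move: (k./2) => h ek; subst k.
  apply: real_even => //; first exact: fact_gt0.
  by apply: Ffam_even => //; lia.
have ek : k = (k./2 + k./2).+1.
  by move: ok odh; case: (odd k) => //= _; rewrite -addnn add1n.
have uk : uphalf k = (k./2).+1 by rewrite uphalf_half (negbFE ok).
have ee : ((k.+1)%:R / (2 * k)%:R = (k./2).+1%:R / k%:R :> R)%R.
  have e1 : k.+1 = 2 * (k./2).+1 by lia.
  by rewrite e1 !natrM -mulf_div divff ?mul1r // pnatr_eq0.
rewrite uk ee.
move: ek; move: (k./2) => h ek; subst k.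
apply: real_odd => //; first exact: fact_gt0.
by apply: Ffam_odd => //; lia.
Qed.
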